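(* Let $(\mathcal{Y},\mathbf{h})$ be an Ingletonian polymatroid and let $0\le \epsilon\le \mathbf{h}(\mathcal{Y})$. Define $\mathbf{g}:2^{\mathcal{Y}}\to\mathbb{R}$ by $\mathbf{g}(\mathcal{A})=\min\big(\mathbf{h}(\mathcal{A}),\ \mathbf{h}(\mathcal{Y})-\epsilon\big)$ for all $\mathcal{A}\subseteq\mathcal{Y}$. Then $(\mathcal{Y},\mathbf{g})$ is also an Ingletonian polymatroid.
   Context: A polymatroid $(\mathcal{X},\mathbf{h})$ consists of a finite ground set $\mathcal{X}$ and a function $\mathbf{h}:2^{\mathcal{X}}\to\mathbb{R}_{\ge 0}$ with $\mathbf{h}(\emptyset)=0$, $\mathbf{h}(\mathcal{A})\le\mathbf{h}(\mathcal{B})$ whenever $\mathcal{A}\subseteq\mathcal{B}$, and $\mathbf{h}(\mathcal{A}\cup\mathcal{B})+\mathbf{h}(\mathcal{A}\cap\mathcal{B})\le\mathbf{h}(\mathcal{A})+\mathbf{h}(\mathcal{B})$ for all $\mathcal{A},\mathcal{B}\subseteq\mathcal{X}$. Writing concatenation for union, define for subsets $\mathcal{A}_1,\dots,\mathcal{A}_4\subseteq\mathcal{X}$ $J_{\mathbf{h}}(\mathcal{A}_1,\mathcal{A}_2,\mathcal{A}_3,\mathcal{A}_4)=\mathbf{h}(\mathcal{A}_1\mathcal{A}_2)+\mathbf{h}(\mathcal{A}_1\mathcal{A}_3)+\mathbf{h}(\mathcal{A}_1\mathcal{A}_4)+\mathbf{h}(\mathcal{A}_2\mathcal{A}_3)+\mathbf{h}(\mathcal{A}_2\mathcal{A}_4)-\mathbf{h}(\mathcal{A}_1)-\mathbf{h}(\mathcal{A}_2)-\mathbf{h}(\mathcal{A}_3\mathcal{A}_4)-\mathbf{h}(\mathcal{A}_1\mathcal{A}_2\mathcal{A}_3)-\mathbf{h}(\mathcal{A}_1\mathcal{A}_2\mathcal{A}_4)$.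 A polymatroid is Ingletonian if $J_{\mathbf{h}}(\mathcal{A}_1,\mathcal{A}_2,\mathcal{A}_3,\mathcal{A}_4)\ge 0$ for all subsets $\mathcal{A}_1,\dots,\mathcal{A}_4\subseteq\mathcal{X}$. *)

(* Defs.v *)
From mathcomp Require Import all_boot all_order all_algebra.
Set Implicit Arguments. Unset Strict Implicit. Unset Printing Implicit Defensive.
Import Order.TTheory GRing.Theory Num.Theory.
Local Open Scope ring_scope.

Definition polymatroid (R : realFieldType) (T : finType) (h : {set T} -> R) : Prop :=
  [/\ forall A, 0 <= h A,
      h set0 = 0,
      (forall A B : {set T}, A \subset B -> h A <= h B)
    & (forall A B : {set T}, h (A :|: B) + h (A :&: B) <= h A + h B)].

Definition Ingleton_expr (R : realFieldType) (T : finType) (h : {set T} -> R)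
  (A1 A2 A3 A4 : {set T}) : R :=
  h (A1 :|: A2) + h (A1 :|: A3) + h (A1 :|: A4) + h (A2 :|: A3) + h (A2 :|: A4)
  - h A1 - h A2 - h (A3 :|: A4) - h (A1 :|: A2 :|: A3) - h (A1 :|: A2 :|: A4).

Definition ingletonian (R : realFieldType) (T : finType) (h : {set T} -> R) : Prop :=
  polymatroid h /\
  forall A1 A2 A3 A4 : {set T}, 0 <= Ingleton_expr h A1 A2 A3 A4.

(* Main.v *)
Require Import Defs.
From mathcomp Require Import all_boot all_order all_algebra.
From mathcomp Require Import lra.
From Stdlib Require Import Btauto.
Import Order.TTheory GRing.Theory Num.Theory.
Local Open Scope ring_scope.

Section Aux.
Variables (R : realFieldType) (T : finType) (h : {set T} -> R).
Variables (A1 A2 A3 A4 : {set T}).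

Definition sel (b : bool) (A : {set T}) : {set T} := if b then A else set0.
Lemma mem_sel b A x : (x \in sel b A) = b && (x \in A).
Proof. by case: b; rewrite /sel ?inE. Qed.

Definition u a b c d := sel a A1 :|: sel b A2 :|: sel c A3 :|: sel d A4.

Lemma sub_u (Hp : polymatroid h) a b c d a' b' c' d' :
  h (u (a||a') (b||b') (c||c') (d||d')) + h (u (a&&a') (b&&b') (c&&c') (d&&d'))
  <= h (u a b c d) + h (u a' b' c' d').
Proof.
case: Hp => _ _ Hm Hs.
have E : u (a||a') (b||b') (c||c') (d||d') = u a b c d :|: u a' b' c' d'.
  apply/setP => x; rewrite /u !inE !mem_sel.
  move: (x \in A1) (x \in A2) (x \in A3) (x \in A4) => p1 p2 p3 p4.
  btauto.
have S : u (a&&a') (b&&b') (c&&c') (d&&d') \subset u a b c d :&: u a' b' c' d'.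
  apply/subsetP => x; rewrite /u !inE !mem_sel.
  clear E; move: (x \in A1) (x \in A2) (x \in A3) (x \in A4) => p1 p2 p3 p4.
  apply/implyP; rewrite ?implybE; match goal with |- is_true ?b => change (b = true) end; btauto.
rewrite E; apply: le_trans (Hs _ _); apply: lerD => //; exact: Hm.
Qed.

Lemma mono_u (Hp : polymatroid h) a b c d a' b' c' d' :
  [&& a ==> a', b ==> b', c ==> c' & d ==> d'] -> h (u a b c d) <= h (u a' b' c' d').
Proof.
case: Hp => _ _ Hm _ H; apply: Hm; apply/subsetP => x; rewrite /u !inE !mem_sel.
move: H (x \in A1) (x \in A2) (x \in A3) (x \in A4) => H p1 p2 p3 p4.
apply/implyP; move: H; apply/implyP; rewrite ?implybE; match goal with |- is_true ?b => change (b = true) end; btauto.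
Qed.
End Aux.

Lemma minP' {R : realFieldType} (x y : R) :
  (x <= y /\ Num.min x y = x) \/ (y < x /\ Num.min x y = y).
Proof. by case: leP => H; [left | right]. Qed.

Lemma minl {R : realFieldType} {x y : R} : x <= y -> Num.min x y = x.
Proof. by move=> H; apply/min_idPl. Qed.
Lemma minr {R : realFieldType} {x y : R} : y <= x -> Num.min x y = y.
Proof. by move=> H; apply/min_idPr. Qed.

Ltac split_min := repeat match goal with |- context [Num.min ?x ?y] =>
  let H := fresh in let E := fresh in
  destruct (minP' x y) as [[H E]|[H E]]; rewrite E end.

Theorem theorem1 (R : realFieldType) (T : finType) (h : {set T} -> R) (eps : R) :
  ingletonian h -> 0 <= eps -> eps <= h [set: T] ->
  ingletonian (fun A : {set T} => Num.min (h A) (h [set: T] - eps)).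
Proof.
move=> [Hp Hi] He1 He2.
have Hp' := Hp; case: Hp' => H0 H00 Hm Hs.
set c := h [set: T] - eps.
have c0 : 0 <= c by rewrite /c subr_ge0.
set g := fun A : {set T} => Num.min (h A) c.
have Pg : polymatroid g.
  split; rewrite /g.
  - by move=> A; rewrite le_min H0.
  - by rewrite H00; apply/min_idPl.
  - move=> A B AB; have HAB := Hm _ _ AB; split_min; lra.
  - move=> A B; have := Hs A B.
    have := Hm _ _ (subsetUl A B); have := Hm _ _ (subsetUr A B).
    have := Hm _ _ (subsetIl A B); have := Hm _ _ (subsetIr A B).
    move=> *; split_min; lra.
split => // A1 A2 A3 A4.
rewrite /Ingleton_expr /g; cbv beta.
case: (leP (h (A1 :|: A2)) c) => H12.
- have := Hi A1 A2 A3 A4; rewrite /Ingleton_expr.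
  have := mono_u _ _ h A1 A2 A3 A4 Hp false false false false true true true true erefl.
have := mono_u _ _ h A1 A2 A3 A4 Hp false true true true true true true true erefl;
  have := mono_u _ _ h A1 A2 A3 A4 Hp true false true true true true true true erefl;
  have := mono_u _ _ h A1 A2 A3 A4 Hp true true false true true true true true erefl;
  have := mono_u _ _ h A1 A2 A3 A4 Hp true true true false true true true true erefl;
  have := sub_u _ _ h A1 A2 A3 A4 Hp true false false false false true false false;
  have := sub_u _ _ h A1 A2 A3 A4 Hp true false true false false true true false;
  have := sub_u _ _ h A1 A2 A3 A4 Hp true false false true false true false true;
  have := sub_u _ _ h A1 A2 A3 A4 Hp true false true true false true true true;
  have := sub_u _ _ h A1 A2 A3 A4 Hp true false false false false false true false;
  have := sub_u _ _ h A1 A2 A3 A4 Hp true true false false false true true false;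
  have := sub_u _ _ h A1 A2 A3 A4 Hp true false false true false false true true;
  have := sub_u _ _ h A1 A2 A3 A4 Hp true true false true false true true true;
  have := sub_u _ _ h A1 A2 A3 A4 Hp true false false false false false false true;
  have := sub_u _ _ h A1 A2 A3 A4 Hp true true false false false true false true;
  have := sub_u _ _ h A1 A2 A3 A4 Hp true false true false false false true true;
  have := sub_u _ _ h A1 A2 A3 A4 Hp true true true false false true true true;
  have := sub_u _ _ h A1 A2 A3 A4 Hp false true false false false false true false;
  have := sub_u _ _ h A1 A2 A3 A4 Hp true true false false true false true false;
  have := sub_u _ _ h A1 A2 A3 A4 Hp false true false true false false true true;
  have := sub_u _ _ h A1 A2 A3 A4 Hp true true false true true false true true;
  have := sub_u _ _ h A1 A2 A3 A4 Hp false true false false false false false true;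
  have := sub_u _ _ h A1 A2 A3 A4 Hp true true false false true false false true;
  have := sub_u _ _ h A1 A2 A3 A4 Hp false true true false false false true true;
  have := sub_u _ _ h A1 A2 A3 A4 Hp true true true false true false true true;
  have := sub_u _ _ h A1 A2 A3 A4 Hp false false true false false false false true;
  have := sub_u _ _ h A1 A2 A3 A4 Hp true false true false true false false true;
  have := sub_u _ _ h A1 A2 A3 A4 Hp false true true false false true false true;
  have := sub_u _ _ h A1 A2 A3 A4 Hp true true true false true true false true;
  rewrite /u /sel /= !(setU0, set0U) H00 => *.
  have E1 : Num.min (h A1) c = h A1.
    by apply/min_idPl; apply: le_trans H12; apply: Hm; apply: subsetUl.
  have E2 : Num.min (h A2) c = h A2.
    by apply/min_idPl; apply: le_trans H12; apply: Hm; apply: subsetUr.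
  rewrite E1 E2.
  have S13 : A1 :|: A3 \subset A1 :|: A2 :|: A3 by apply/subsetP => x; rewrite !inE; case: (x \in A1); case: (x \in A2); case: (x \in A3).
  have S23 : A2 :|: A3 \subset A1 :|: A2 :|: A3 by apply/subsetP => x; rewrite !inE; case: (x \in A1); case: (x \in A2); case: (x \in A3).
  have S14 : A1 :|: A4 \subset A1 :|: A2 :|: A4 by apply/subsetP => x; rewrite !inE; case: (x \in A1); case: (x \in A2); case: (x \in A4).
  have S24 : A2 :|: A4 \subset A1 :|: A2 :|: A4 by apply/subsetP => x; rewrite !inE; case: (x \in A1); case: (x \in A2); case: (x \in A4).
  case: (leP (h (A1 :|: A2 :|: A3)) c) => H123.
  + rewrite (minl (le_trans (Hm _ _ S13) H123)) (minl (le_trans (Hm _ _ S23) H123)).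
    case: (leP (h (A1 :|: A2 :|: A4)) c) => H124.
    * rewrite (minl (le_trans (Hm _ _ S14) H124)) (minl (le_trans (Hm _ _ S24) H124)).
      split_min; lra.
    * split_min; lra.
  + case: (leP (h (A1 :|: A2 :|: A4)) c) => H124.
    * rewrite (minl (le_trans (Hm _ _ S14) H124)) (minl (le_trans (Hm _ _ S24) H124)).
      split_min; lra.
    * split_min; lra.
- have L12 := ltW H12.
  have E123 : Num.min (h (A1 :|: A2 :|: A3)) c = c.
    by apply/min_idPr; apply: (le_trans L12); apply: Hm; apply: subsetUl.
  have E124 : Num.min (h (A1 :|: A2 :|: A4)) c = c.
    by apply/min_idPr; apply: (le_trans L12); apply: Hm; apply: subsetUl.
  rewrite E123 E124.
  have Mc : Num.min (h (A1 :|: A2 :|: A3 :|: A4)) c <= c by rewrite ge_min lexx orbT.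
  have := mono_u _ _ g A1 A2 A3 A4 Pg true true false false true true true true erefl.
  have := sub_u _ _ g A1 A2 A3 A4 Pg true false true false true false false true.
  have := sub_u _ _ g A1 A2 A3 A4 Pg false true true false false true false true.
  have := sub_u _ _ g A1 A2 A3 A4 Pg true false true true false true true true.
  rewrite /u /sel /= !(setU0, set0U) /g (minr L12) => *.
  lra.
Qed.
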